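(* Let $R$ be a commutative ring with identity. If $\gamma_t(\Gamma(R)) \geq 3$, then the girth of $\Gamma(R)$ is $3$.
   Context: All rings are commutative with identity. The zero-divisor graph $\Gamma(R)$ has vertex set $Z(R)^*$ (nonzero zero-divisors); distinct $r,s$ are adjacent iff $rs=0$, and $x$ is adjacent to itself iff $x^2=0$. A total dominating set is $X\subseteq Z(R)^*$ such that every vertex is adjacent to some element of $X$ (self-adjacency counts); $\gamma_t$ is its minimum cardinality. The girth is the length of a shortest cycle through distinct vertices (loops not counted), and is $\infty$ if there is no cycle. *)

(* Defs.v *)
From mathcomp Require Import all_boot all_order all_algebra.
Set Implicit Arguments. Unset Strict Implicit. Unset Printing Implicit Defensive.
Import GRing.Theory.
Local Open Scope ring_scope.

Definition zero_divisor (R : comPzRingType) (x : R) : Prop :=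
  exists y : R, y != 0 /\ x * y = 0.

Definition zdg_vertex (R : comPzRingType) (x : R) : Prop :=
  x != 0 /\ zero_divisor x.

(* adjacency in Gamma(R): distinct r,s adjacent iff rs = 0; x adjacent to
   itself iff x^2 = 0.  Both cases are r * s == 0. *)
Definition zdg_adj (R : comPzRingType) : rel R := fun r s => r * s == 0.

Definition total_dominating (R : comPzRingType) (X : seq R) : Prop :=
  (forall x, x \in X -> zdg_vertex x) /\
  (forall v, zdg_vertex v -> exists2 x, x \in X & zdg_adj v x).

(* gamma_t(Gamma(R)) >= n : every total dominating set has at least n
   elements (infinite ones trivially do, so only finite ones matter) *)
Definition gamma_t_ge (R : comPzRingType) (n : nat) : Prop :=
  forall X : seq R, uniq X -> total_dominating X -> (n <= size X)%N.

Definition zdg_cycle (R : comPzRingType) (s : seq R) : Prop :=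
  (3 <= size s)%N /\ uniq s /\ (forall x, x \in s -> zdg_vertex x) /\
  cycle (@zdg_adj R) s.

Definition girth_eq (R : comPzRingType) (g : nat) : Prop :=
  (exists s : seq R, zdg_cycle s /\ size s = g) /\
  (forall s : seq R, zdg_cycle s -> (g <= size s)%N).

(* Main.v *)
Require Import Defs.
From mathcomp Require Import all_boot all_order all_algebra.
From Stdlib Require Import Classical.
Set Implicit Arguments. Unset Strict Implicit. Unset Printing Implicit Defensive.
Import GRing.Theory.
Local Open Scope ring_scope.

Section Aux.
Variable R : comPzRingType.

Definition tri (a b c : R) := [/\ a != 0, b != 0, c != 0,
  [/\ a != b, b != c & c != a] & [/\ a*b = 0, b*c = 0 & c*a = 0]].

Lemma tri_cycle a b c : tri a b c -> zdg_cycle [:: a; b; c].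
Proof.
case=> a0 b0 c0 [ab bc ca] [p q r]; split=> //; split.
  rewrite /= !inE negb_or ab /= andbT; apply/andP; split=> //; by rewrite eq_sym.
split; last by rewrite /= /zdg_adj p q r !eqxx.
move=> y; rewrite !inE => /or3P [/eqP->|/eqP->|/eqP->]; split=> //.
- by exists b.
- by exists c.
- by exists a.
Qed.

Hypothesis NT : forall a b c, ~ tri a b c.

Lemma T1 (x y : R) : x != 0 -> x*x = 0 -> y != 0 -> y*y = 0 -> x*y = 0 ->
  y != x -> y != -x -> False.
Proof.
move=> x0 xx y0 yy xy yx ynx; apply: (NT (a:=x) (b:=y) (c:=x+y)); split=> //.
- by apply/eqP=> h; move: ynx; rewrite -addr_eq0 addrC h eqxx.
- split=> //.
  + by rewrite eq_sym.
  + apply/eqP=> h; move/eqP: x0; apply.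
    by rewrite -[x](addrK y) -h subrr.
  + apply/eqP=> h; move/eqP: y0; apply.
    by rewrite -[y](addKr x) h addNr.
- split=> //.
  + by rewrite mulrDr yy mulrC xy addr0.
  + by rewrite mulrDl xx mulrC xy add0r.
Qed.

Lemma pm (x t : R) : x != 0 -> x*x = 0 -> t*x != 0 -> t*x = x \/ t*x = -x.
Proof.
move=> x0 xx tx0; apply: NNPP => H.
apply: (T1 x0 xx tx0).
- by rewrite mulrACA xx mulr0.
- by rewrite mulrCA xx mulr0.
- by apply/eqP=> h; apply: H; left.
- by apply/eqP=> h; apply: H; right.
Qed.

Lemma ann_x (x t s : R) : x != 0 -> x*x = 0 -> t*x != 0 -> t*s = 0 -> s*x = 0.
Proof.
move=> x0 xx tx ts.
have e : s*(t*x) = 0 by rewrite mulrCA mulrA ts mul0r.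
case: (pm x0 xx tx) => h; rewrite h in e => //.
by move/eqP: e; rewrite mulrN oppr_eq0 => /eqP.
Qed.

Lemma dom_nonred (x v w u z : R) : x != 0 -> x*x = 0 -> v*x != 0 -> w != 0 ->
  v*w = 0 -> u*x != 0 -> u*w != 0 -> z != 0 -> u*z = 0 -> False.
Proof.
move=> x0 xx vx w0 vw ux uw z0 uz.
have wx := ann_x x0 xx vx vw.
have zx := ann_x x0 xx ux uz.
have uwx : (u*w)*x = 0 by rewrite -mulrA wx mulr0.
have vuw : v*(u*w) = 0 by rewrite mulrCA vw mulr0.
have uwz : (u*w)*z = 0 by rewrite mulrAC uz mul0r.
have uwnx : u*w != x by apply/eqP=> h; move/eqP: vx; apply; rewrite -h.
have uwnnx : u*w != -x.
  apply/eqP=> h; move/eqP: vx; apply; apply/eqP; rewrite -oppr_eq0 -mulrN -h.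
  by rewrite vuw.
case: (eqVneq (u*w) z) => [e|ne].
  apply: (T1 x0 xx uw) => //.
  - by rewrite {2}e.
  - by rewrite mulrC.
apply: (NT (a:=x) (b:=u*w) (c:=z)); split=> //.
- split=> //; first by rewrite eq_sym.
  by apply/eqP=> h; move/eqP: ux; apply; rewrite -h.
- by split=> //; rewrite mulrC.
Qed.

Hypothesis red : forall y : R, y*y = 0 -> y = 0.

Lemma dom_red1 (a b u w : R) : a != 0 -> b != 0 -> a*b = 0 -> u*a != 0 ->
  u*w = 0 -> w*a != 0 -> False.
Proof.
move=> a0 b0 ab ua uw wa.
apply: (NT (a:=b) (b:=w*a) (c:=u*a)); split=> //.
- split.
  + apply/eqP=> h; move/eqP: b0; apply; apply: red.
    by rewrite {2}h mulrCA (mulrC b a) ab mulr0.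
  + apply/eqP=> h; move/eqP: ua; apply; apply: red.
    by rewrite {1}(esym h) mulrACA (mulrC w) uw mul0r.
  + apply/eqP=> h; move/eqP: b0; apply; apply: red.
    by rewrite {1}(esym h) -mulrA ab mulr0.
- split.
  + by rewrite mulrCA (mulrC b a) ab mulr0.
  + by rewrite mulrACA (mulrC w) uw mul0r.
  + by rewrite -mulrA ab mulr0.
Qed.

Lemma dom_red (a b u w : R) : a != 0 -> b != 0 -> a*b = 0 -> u*a != 0 ->
  u*b != 0 -> w != 0 -> u*w = 0 -> False.
Proof.
move=> a0 b0 ab ua ub w0 uw.
case: (eqVneq (w*a) 0) => wa; last exact: (dom_red1 a0 b0 ab ua uw wa).
case: (eqVneq (w*b) 0) => wb; last first.
  by apply: (dom_red1 b0 a0 _ ub uw wb); rewrite mulrC.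
apply: (NT (a:=a) (b:=b) (c:=w)); split=> //.
- split.
  + apply/eqP=> h; move/eqP: a0; apply; apply: red.
    by rewrite {2}h.
  + apply/eqP=> h; move/eqP: b0; apply; apply: red.
    by rewrite {2}h mulrC.
  + apply/eqP=> h; move/eqP: a0; apply; apply: red.
    by rewrite -{1}h.
- by split=> //; rewrite mulrC.
Qed.

End Aux.

Theorem proposition3p5 (R : comPzRingType) :
  gamma_t_ge R 3 -> girth_eq R 3.
Proof.
move=> H; split; last by move=> s [].
apply: NNPP => Hn.
have NT : forall a b c : R, ~ tri a b c.
  by move=> a b c T; apply: Hn; exists [:: a; b; c]; split=> //; exact: tri_cycle.
case: (classic (exists x : R, x != 0 /\ x*x = 0)) => [[x [x0 xx]]|Hred].
  case: (classic (exists v, zdg_vertex v /\ v*x != 0)) =>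
      [[v [[v0 [w [w0 vw]]] vx]]|Hall].
    have xw : x != w by apply/eqP=> h; move/eqP: vx; apply; rewrite h.
    suff T : total_dominating [:: x; w].
      have U : uniq [:: x; w] by rewrite /= inE xw.
      by have := H _ U T.
    split.
      move=> y; rewrite !inE => /orP [/eqP->|/eqP->]; split=> //.
      - by exists x.
      - by exists v; split=> //; rewrite mulrC.
    move=> u [u0 [z [z0 uz]]].
    case: (eqVneq (u*x) 0) => ux; first by exists x; rewrite ?inE ?eqxx //; apply/eqP.
    case: (eqVneq (u*w) 0) => uw; first by exists w; rewrite ?inE ?eqxx ?orbT //; apply/eqP.
    by case: (dom_nonred NT x0 xx vx w0 vw ux uw z0 uz).
  suff T : total_dominating [:: x] by have := H [:: x] isT T.
  split.
    by move=> y; rewrite !inE => /eqP->; split=> //; exists x.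
  move=> u uv; exists x; first by rewrite inE.
  apply: NNPP => h; apply: Hall; exists u; split=> //; exact/negP.
have red : forall y : R, y*y = 0 -> y = 0.
  move=> y yy; apply: NNPP => h; apply: Hred; exists y; split=> //; exact/eqP.
case: (classic (exists a : R, zdg_vertex a)) => [[a [a0 [b [b0 ab]]]]|Hno].
  have anb : a != b.
    apply/eqP=> h; move/eqP: a0; apply; apply: red; by rewrite {2}h.
  suff T : total_dominating [:: a; b].
    have U : uniq [:: a; b] by rewrite /= inE anb.
    by have := H _ U T.
  split.
    move=> y; rewrite !inE => /orP [/eqP->|/eqP->]; split=> //.
    - by exists b.
    - by exists a; split=> //; rewrite mulrC.
  move=> u [u0 [w [w0 uw]]].
  case: (eqVneq (u*a) 0) => ua; first by exists a; rewrite ?inE ?eqxx //; apply/eqP.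
  case: (eqVneq (u*b) 0) => ub; first by exists b; rewrite ?inE ?eqxx ?orbT //; apply/eqP.
  by case: (dom_red NT red a0 b0 ab ua ub w0 uw).
suff T : total_dominating ([::] : seq R) by have := H [::] isT T.
split=> // v hv; case: Hno; by exists v.
Qed.
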